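(* Let $n\ge 3$, and consider the polynomial ring $\mathbb{Q}[a_0,\ldots,a_{n-1},r_1,\ldots,r_n]$ in $2n$ indeterminates. For $i=1,\ldots,n$ let $s_i$ be the elementary symmetric polynomial of degree $i$ in $r_1,\ldots,r_n$ and $v_i=a_{n-i}-(-1)^i s_i$. Let $D_2\in\mathbb{Q}[a_0,\ldots,a_{n-1}]$ be the polynomial obtained by expressing the symmetric polynomial $\prod_{1\le i,j,k\le n,\ i<j,\ j\ne k,\ k\ne i}(2r_k-r_i-r_j)$ in terms of $a_{n-i}=(-1)^i s_i$. Then \begin{align*} \Big\langle \prod_{\substack{1\le i,j,k\le n\\ i<j,\ j\ne k,\ k\ne i}}(2r_k-r_i-r_j),\,v_1,\ldots,v_n\Big\rangle\cap\mathbb{Q}[a_0,\ldots,a_{n-1}] &=\langle 2r_1-r_2-r_3,\,v_1,\ldots,v_n\rangle\cap\mathbb{Q}[a_0,\ldots,a_{n-1}]\\ &=\langle D_2\rangle . \end{align*}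
   Context: $\langle g_1,\ldots,g_m\rangle$ denotes the ideal generated by $g_1,\ldots,g_m$ (in the ring containing the generators). *)

(* Defs.v *)
From mathcomp Require Import all_boot all_algebra.
From mathcomp Require Import mpoly.
Set Implicit Arguments. Unset Strict Implicit. Unset Printing Implicit Defensive.
Import GRing.Theory.
Local Open Scope ring_scope.

Definition in_ideal (R : comPzRingType) (gs : seq R) (p : R) : Prop :=
  exists c : 'I_(size gs) -> R, p = \sum_(i < size gs) c i * gs`_i.

(* Variable r_{k+1} (0-based index k) of Q[r_1,...,r_n]; 0 if k >= n. *)
Definition rX (n k : nat) : {mpoly rat[n]} :=
  if insub k is Some i then 'X_i else 0.

Definition Pprod (n : nat) : {mpoly rat[n]} :=
  \prod_(i < n) \prod_(j < n | (i < j)%N) \prod_(k < n | (k != i) && (k != j))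
     (2 * 'X_k - 'X_i - 'X_j).

(* The big ring Q[a_0..a_{n-1}, r_1..r_n] = {mpoly rat[n + n]}:
   a_j = 'X_(lshift n j), r_{i+1} = 'X_(rshift n i). *)
Definition emb_a (n : nat) (q : {mpoly rat[n]}) : {mpoly rat[n + n]} :=
  comp_mpoly [tuple ('X_(lshift n j) : {mpoly rat[n + n]}) | j < n] q.
Definition emb_r (n : nat) (q : {mpoly rat[n]}) : {mpoly rat[n + n]} :=
  comp_mpoly [tuple ('X_(rshift n i) : {mpoly rat[n + n]}) | i < n] q.

(* v_{i+1} = a_{n-(i+1)} - (-1)^(i+1) s_{i+1}, for i = 0..n-1. *)
Definition vgen (n : nat) (i : 'I_n) : {mpoly rat[n + n]} :=
  'X_(lshift n (rev_ord i)) - emb_r ((-1) ^+ i.+1 * mesym n rat i.+1).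

Definition vgens (n : nat) : seq {mpoly rat[n + n]} :=
  [seq vgen i | i <- enum 'I_n].

Definition a_to_r (n : nat) : n.-tuple {mpoly rat[n]} :=
  [tuple (-1) ^+ (n - j) * mesym n rat (n - j) | j < n].

(* Main.v *)
Require Import Defs.
From mathcomp Require Import all_boot all_algebra.
From mathcomp Require Import mpoly.
Import GRing.Theory.
Local Open Scope ring_scope.
From mathcomp Require Import perm fingroup.
From mathcomp Require Import ring lra.
Import Num.Theory.
Set Implicit Arguments. Unset Strict Implicit.


Section Ideal.
Variable R : comPzRingType.
Implicit Types (gs : seq R) (p q : R).

Lemma in_ideal0 gs : in_ideal gs 0.
Proof. by exists (fun _ => 0); rewrite big1 // => i _; rewrite mul0r. Qed.

Lemma in_idealD gs p q : in_ideal gs p -> in_ideal gs q -> in_ideal gs (p + q).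
Proof.
move=> [c ->] [d ->]; exists (fun i => c i + d i).
by rewrite -big_split; apply: eq_bigr => i _; rewrite mulrDl.
Qed.

Lemma in_idealMl gs a p : in_ideal gs p -> in_ideal gs (a * p).
Proof.
move=> [c ->]; exists (fun i => a * c i).
by rewrite mulr_sumr; apply: eq_bigr => i _; rewrite mulrA.
Qed.

Lemma in_idealN gs p : in_ideal gs p -> in_ideal gs (- p).
Proof. by move=> h; rewrite -mulN1r; apply: in_idealMl. Qed.

Lemma in_idealB gs p q : in_ideal gs p -> in_ideal gs q -> in_ideal gs (p - q).
Proof. by move=> hp hq; apply: in_idealD => //; apply: in_idealN. Qed.

Lemma in_ideal_sum gs (I : Type) (r : seq I) (F : I -> R) :
  (forall i, in_ideal gs (F i)) -> in_ideal gs (\sum_(i <- r) F i).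
Proof.
move=> h; elim: r => [|x r IH]; first by rewrite big_nil; apply: in_ideal0.
by rewrite big_cons; apply: in_idealD.
Qed.

Lemma in_ideal_mem gs g : g \in gs -> in_ideal gs g.
Proof.
move=> hg; have hi : (index g gs < size gs)%N by rewrite index_mem.
exists (fun i => ((i : nat) == index g gs)%:R).
rewrite (bigD1 (Ordinal hi)) //= eqxx mul1r nth_index // big1 ?addr0 //.
by move=> i /negbTE; rewrite -val_eqE /= => ->; rewrite mul0r.
Qed.

Lemma in_ideal_sub gs hs p : (forall g, g \in gs -> in_ideal hs g) ->
  in_ideal gs p -> in_ideal hs p.
Proof.
move=> sub [c ->]; apply: in_ideal_sum => i; apply: in_idealMl.
by apply: sub; apply: mem_nth.
Qed.

Lemma in_ideal1 g p : in_ideal [:: g] p <-> exists c, p = c * g.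
Proof.
split; first by move=> [c ->]; exists (c ord0); rewrite big_ord1.
by move=> [c ->]; apply: in_idealMl; apply: in_ideal_mem; rewrite inE.
Qed.

Lemma in_ideal_diffM gs a b a' b' : in_ideal gs (a - b) -> in_ideal gs (a' - b') ->
  in_ideal gs (a * a' - b * b').
Proof.
move=> h1 h2; have -> : a * a' - b * b' = (a - b) * a' + b * (a' - b').
  by rewrite mulrBl mulrBr addrA subrK.
by apply: in_idealD; [rewrite mulrC|]; apply: in_idealMl.
Qed.

Lemma in_ideal_diffX gs a b e : in_ideal gs (a - b) -> in_ideal gs (a ^+ e - b ^+ e).
Proof.
move=> h; elim: e => [|e IH]; first by rewrite !expr0 subrr; apply: in_ideal0.
by rewrite !exprS; apply: in_ideal_diffM.
Qed.

End Ideal.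

Section Comp.
Variable R : comNzRingType.

Lemma comp_mpolyA n k l (p : {mpoly R[n]}) (t : n.-tuple {mpoly R[k]})
  (u : k.-tuple {mpoly R[l]}) :
  (p \mPo t) \mPo u = p \mPo [tuple (tnth t i \mPo u) | i < n].
Proof.
rewrite (comp_mpolyE p t) (comp_mpolyE p) raddf_sum; apply: eq_bigr => m _.
rewrite /= comp_mpolyZ rmorph_prod; congr (_ *: _); apply: eq_bigr => i _.
by rewrite rmorphXn tnth_mktuple.
Qed.

Lemma comp_mpoly_cong n k (gs : seq {mpoly R[k]}) (p : {mpoly R[n]})
  (t1 t2 : n.-tuple {mpoly R[k]}) :
  (forall i, in_ideal gs (tnth t1 i - tnth t2 i)) ->
  in_ideal gs ((p \mPo t1) - (p \mPo t2)).
Proof.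
move=> h; rewrite (comp_mpolyE p t1) (comp_mpolyE p t2) -sumrB; apply: in_ideal_sum => m.
rewrite -scalerBr -mul_mpolyC; apply: in_idealMl.
apply: (big_ind2 (fun x y => in_ideal gs (x - y))).
- by rewrite subrr; apply: in_ideal0.
- by move=> ? ? ? ? ; apply: in_ideal_diffM.
- by move=> i _; apply: in_ideal_diffX.
Qed.

End Comp.

Section Red.
Variable n : nat.
Local Notation P := {mpoly rat[n]}.
Local Notation B := {mpoly rat[n + n]}.

Definition tphi : (n + n).-tuple P :=
  [tuple match split l with inl j => tnth (a_to_r n) j | inr i => 'X_i end | l < n + n].

Lemma phi_emb_a q : emb_a q \mPo tphi = q \mPo a_to_r n.
Proof.
rewrite /emb_a comp_mpolyA; congr (_ \mPo _); apply: eq_from_tnth => j.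
rewrite !tnth_mktuple comp_mpolyXU -tnth_nth tnth_mktuple.
have -> : split (lshift n j) = inl j by exact: (@unsplitK n n (inl j)).
by rewrite tnth_mktuple.
Qed.

Lemma phi_emb_r q : emb_r q \mPo tphi = q.
Proof.
rewrite /emb_r comp_mpolyA -[RHS]comp_mpoly_id; congr (_ \mPo _).
apply: eq_from_tnth => j.
rewrite !tnth_mktuple comp_mpolyXU -tnth_nth tnth_mktuple.
by rewrite (unsplitK (inr j)).
Qed.

Lemma phi_vgen i : vgen i \mPo tphi = 0.
Proof.
rewrite /vgen raddfB /= phi_emb_r comp_mpolyXU -tnth_nth tnth_mktuple.
rewrite (unsplitK (inl _)) tnth_mktuple /=.
have -> : (n - (n - i.+1) = i.+1)%N by rewrite subKn.
by rewrite subrr.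
Qed.

Lemma vgen_mem i : vgen i \in vgens n.
Proof. by apply: map_f; rewrite mem_enum. Qed.

Lemma ideal_char g q :
  in_ideal (emb_r g :: vgens n) (emb_a q) <-> exists c, q \mPo a_to_r n = c * g.
Proof.
split.
- move=> [c hc]; exists (c ord0 \mPo tphi).
  rewrite -phi_emb_a hc big_ord_recl /= rmorphD rmorphM /= phi_emb_r.
  rewrite rmorph_sum /= big1 ?addr0 // => i _.
  rewrite rmorphM /=.
  have : (vgens n)`_i \in vgens n by apply: mem_nth.
  by case/mapP => j _ ->; rewrite phi_vgen mulr0.
- move=> [c hc].
  have -> : emb_a q = (emb_a q - emb_r (q \mPo a_to_r n)) + emb_r c * emb_r g.
    by rewrite hc /emb_r rmorphM /= subrK.
  apply: in_idealD; last first.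
    by apply: in_idealMl; apply: in_ideal_mem; rewrite inE eqxx.
  apply: (@in_ideal_sub _ (vgens n)).
    by move=> x hx; apply: in_ideal_mem; rewrite inE hx orbT.
  rewrite /emb_a /emb_r comp_mpolyA.
  apply: comp_mpoly_cong => j; rewrite !tnth_mktuple.
  have -> : 'X_(lshift n j) - ((-1) ^+ (n - j) * mesym n rat (n - j) \mPo [tuple 'X_(rshift n i) | i < n])
     = vgen (rev_ord j).
    rewrite /vgen rev_ordK /emb_r /=.
    by have -> : (n - j = (n - j.+1).+1)%N by rewrite subnSK.
  by apply: in_ideal_mem; apply: vgen_mem.
Qed.

End Red.

Lemma comb (n : nat) (i j k i' j' k' : 'I_n) :
  (i < j)%N -> k != i -> k != j -> (i' < j')%N -> k' != i' -> k' != j' ->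
  (forall m : 'I_n, let W l := if l == k then (2%:R^-1 : rat) * ((i == m)%:R + (j == m)%:R)
                                else (l == m)%:R in 2 * W k' - W i' - W j' = 0) ->
  [/\ i' = i, j' = j & k' = k].
Proof.
move=> hij hki hkj hij' hki' hkj' HE.
have nij : i != j by rewrite -val_eqE /= neq_ltn hij.
have nij' : i' != j' by rewrite -val_eqE /= neq_ltn hij'.
have hk : k' = k.
  apply/eqP/negP => /negP hk.
  have := HE k'; rewrite /= (negbTE hk) eqxx (eq_sym i' k') (negbTE hki').
  rewrite (eq_sym j' k') (negbTE hkj').
  case: (eqVneq i' k) => [ei|ni].
    subst i'; rewrite (eq_sym j' k) (negbTE nij').
    by do ![case: (_ == _)]; rewrite /= ?mulr1n ?mulr0n; lra.
  idtac.
  case: (eqVneq j' k) => [ej|nj]; last by rewrite /= ?mulr1n ?mulr0n; lra.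
  by subst j'; do ![case: (_ == _)]; rewrite /= ?mulr1n ?mulr0n; lra.
subst k'.
have memi : (i' == i) || (i' == j).
  have := HE i'; rewrite /= !eqxx (eq_sym i' k) (negbTE hki') (eq_sym j' k) (negbTE hkj').
  rewrite (eq_sym j' i') (negbTE nij') (eq_sym i i') (eq_sym j i').
  by do ![case: (_ == _)] => //=; rewrite ?mulr1n ?mulr0n => H; exfalso; lra.
have memj : (j' == i) || (j' == j).
  have := HE j'; rewrite /= !eqxx (eq_sym i' k) (negbTE hki') (eq_sym j' k) (negbTE hkj').
  rewrite (negbTE nij') (eq_sym i j') (eq_sym j j').
  by do ![case: (_ == _)] => //=; rewrite ?mulr1n ?mulr0n => H; exfalso; lra.
case/orP: memi => /eqP ei; subst i'.
  case/orP: memj => /eqP ej; subst j'; last by [].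
  by rewrite eqxx in nij'.
case/orP: memj => /eqP ej; subst j'.
  by move: (ltn_trans hij hij'); rewrite ltnn.
by rewrite eqxx in nij'.
Qed.

Section Lin.
Variable n : nat.
Local Notation P := {mpoly rat[n]}.

Definition lf (i j k : 'I_n) : P := 2 * 'X_k - 'X_i - 'X_j.
Definition rt (i j k : 'I_n) : n.-tuple P :=
  [tuple if l == k then (2%:R^-1 : rat) *: ('X_i + 'X_j) else 'X_l | l < n].
Definition mdvd (a b : P) := exists c, b = c * a.

Lemma tnth_rt i j k l : tnth (rt i j k) l =
  if l == k then (2%:R^-1 : rat) *: ('X_i + 'X_j) else 'X_l.
Proof. by rewrite tnth_mktuple. Qed.

Lemma half2 (y : P) : 2 * ((2%:R^-1 : rat) *: y) = y.
Proof.
by rewrite -mul_mpolyC mulrA -mpolyC_nat -mpolyCM mulfV // mpolyC1 mul1r.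
Qed.

Lemma rho_lf i j k : k != i -> k != j -> lf i j k \mPo rt i j k = 0.
Proof.
move=> hi hj; rewrite /lf !rmorphB /= rmorphM rmorph_nat /= !comp_mpolyXU.
rewrite -!tnth_nth !tnth_rt eqxx eq_sym (negbTE hi) eq_sym (negbTE hj).
rewrite half2; ring.
Qed.

Lemma rho_dvd i j k x : k != i -> k != j -> x \mPo rt i j k = 0 -> mdvd (lf i j k) x.
Proof.
move=> hi hj hx; apply/in_ideal1.
rewrite -[x]comp_mpoly_id -[x \mPo _]subr0 -hx.
apply: comp_mpoly_cong => l; rewrite tnth_rt tnth_mktuple.
case: eqP => [->|_]; last by rewrite subrr; apply: in_ideal0.
apply/in_ideal1; exists (2%:R^-1 : rat)%:MP.
have H : ((2%:R^-1 : rat)%:MP : P) * 2 = 1.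
  by rewrite -mpolyC_nat -mpolyCM mulVf // mpolyC1.
rewrite /lf -mul_mpolyC !mulrBr mulrA H mul1r; ring.
Qed.


Lemma lf_eval (v : 'I_n -> rat) i j k : (lf i j k).@[v] = 2 * v k - v i - v j.
Proof. by rewrite /lf !mevalB mevalM !mevalXU rmorph_nat. Qed.

Lemma lf_neq0 i j k : k != i -> k != j -> lf i j k != 0.
Proof.
move=> hi hj; apply/eqP => /(congr1 (meval (fun l => (l == k)%:R))).
rewrite lf_eval meval0 eqxx eq_sym (negbTE hi) eq_sym (negbTE hj) /=.
by rewrite ?mulr1n ?mulr0n => H; lra.
Qed.

Lemma rho_ne0 (i j k i' j' k' : 'I_n) : (i < j)%N -> k != i -> k != j ->
  (i' < j')%N -> k' != i' -> k' != j' ->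
  lf i' j' k' \mPo rt i j k = 0 -> [/\ i' = i, j' = j & k' = k].
Proof.
move=> h1 h2 h3 h4 h5 h6 H; apply: comb => // m /=.
move: (congr1 (meval (fun l => (l == m)%:R)) H).
rewrite comp_mpoly_meval meval0 lf_eval !tnth_rt !(fun_if (meval _)).
by rewrite !mevalZ !mevalD !mevalXU.
Qed.

End Lin.

Section Sym.
Variable n : nat.
Local Notation P := {mpoly rat[n]}.

Lemma msymXU (s : 'S_n) (i : 'I_n) : msym s ('X_i : P) = 'X_(s i).
Proof.
rewrite msymX; congr mpolyX; apply/mnmP => l.
by rewrite mnmE !mnm1E -(inj_eq (@perm_inj _ s)) permKV.
Qed.

Lemma msym_lf (s : 'S_n) i j k : msym s (lf i j k) = lf (s i) (s j) (s k).
Proof. by rewrite /lf !msymB msymM rmorph_nat !msymXU. Qed.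

Lemma lfC i j k : lf i j k = lf j i k :> P.
Proof. by rewrite /lf; ring. Qed.

Lemma dvd_msym (f : P) (s : 'S_n) i j k : f \is symmetric ->
  mdvd (lf i j k) f -> mdvd (lf (s i) (s j) (s k)) f.
Proof.
move=> /issymP hs [c hc]; exists (msym s c).
by rewrite -msym_lf -msymM -hc hs.
Qed.

Lemma dvd_reach (f : P) a b c i j k : f \is symmetric ->
  a != b -> c != a -> c != b -> i != j -> k != i -> k != j ->
  mdvd (lf a b c) f -> mdvd (lf i j k) f.
Proof.
move=> hs hab hca hcb hij hki hkj h.
pose t1 := tperm c k.
have h1 := dvd_msym t1 hs h.
rewrite [t1 c]tpermL in h1.
set a1 := t1 a in h1; set b1 := t1 b in h1.
have ha1 : a1 != k by rewrite -[k](tpermL c k) (inj_eq perm_inj) eq_sym.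
have hb1 : b1 != k by rewrite -[k](tpermL c k) (inj_eq perm_inj) eq_sym.
have hab1 : a1 != b1 by rewrite (inj_eq perm_inj).
pose t2 := tperm a1 i.
have h2 := dvd_msym t2 hs h1.
rewrite [t2 a1]tpermL [t2 k]tpermD // in h2; last by rewrite eq_sym.
set b2 := t2 b1 in h2.
have hb2i : b2 != i by rewrite -[i](tpermL a1 i) (inj_eq perm_inj) eq_sym.
have hb2k : b2 != k.
  have e : t2 k = k by rewrite tpermD // eq_sym.
  by rewrite -e /b2 (inj_eq perm_inj).
pose t3 := tperm b2 j.
have h3 := dvd_msym t3 hs h2.
by rewrite [t3 b2]tpermL [t3 i]tpermD ?[t3 k]tpermD // ?(eq_sym j) in h3.
Qed.

Definition T := ('I_n * ('I_n * 'I_n))%type.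
Definition valid (x : T) := [&& (x.1 < x.2.1)%N, x.2.2 != x.1 & x.2.2 != x.2.1].
Definition lfx (x : T) := lf x.1 x.2.1 x.2.2.

Lemma prod_dvd (r : seq T) (f : P) : uniq r -> all valid r ->
  (forall x, x \in r -> mdvd (lfx x) f) -> mdvd (\prod_(x <- r) lfx x) f.
Proof.
elim: r f => [|x r IH] f /=.
  by move=> _ _ _; exists f; rewrite big_nil mulr1.
move=> /andP[xr ur] /andP[vx vr] hd.
have [g hg] := IH f ur vr (fun y hy => hd y (mem_behead (s := x :: r) hy)).
case/and3P: vx => v1 v2 v3.
have hf0 : f \mPo rt x.1 x.2.1 x.2.2 = 0.
  have [c ->] := hd x (mem_head _ _).
  by rewrite rmorphM /= rho_lf // mulr0.
have hg0 : g \mPo rt x.1 x.2.1 x.2.2 = 0.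
  move: hf0; rewrite hg rmorphM rmorph_prod /= => /eqP.
  rewrite mulf_eq0 => /orP[/eqP //|] hp; exfalso; move: hp; apply/negP.
  rewrite prodf_seq_neq0.
  apply/allP => y hy; apply/implyP => _; apply/eqP => h0.
  case/and3P: (allP vr y hy) => w1 w2 w3.
  have [e1 e2 e3] := rho_ne0 v1 v2 v3 w1 w2 w3 h0.
  have exy : y = x by move: e1 e2 e3; case: (x) => [a [b c]]; case: (y) => [a' [b' c']] /= -> -> ->.
  by rewrite -exy hy in xr.
have [c hc] := rho_dvd v2 v3 hg0.
by exists c; rewrite hg hc big_cons mulrA.
Qed.

End Sym.

Section Sym2.
Variable n : nat.
Local Notation P := {mpoly rat[n]}.

Lemma Pprod_big : Pprod n = \prod_(x <- [seq x <- index_enum (T n) | valid x]) lfx x.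
Proof.
rewrite big_filter /Pprod.
rewrite (eq_bigr (fun i : 'I_n => \prod_(p : 'I_n * 'I_n | (i < p.1)%N && ((p.2 != i) && (p.2 != p.1))) (2 * 'X_p.2 - 'X_i - 'X_p.1 : P))); last by move=> i _; rewrite (pair_big_dep (fun j : 'I_n => (i < j)%N)).
rewrite pair_big_dep; apply: eq_big => // x.
Qed.

Lemma sign2 a (y : P) : (-1) ^+ a * ((-1) ^+ a * y) = y.
Proof. by rewrite mulrA -exprD addnn -mul2n exprM sqrrN !expr1n mul1r. Qed.

Definition Sx : n.-tuple P := [tuple mesym n rat i.+1 | i < n].
Definition Vx : n.-tuple P := [tuple (-1) ^+ (n - j) * 'X_(rev_ord j) | j < n].
Definition Wx : n.-tuple P := [tuple (-1) ^+ (i.+1) * 'X_(rev_ord i) | i < n].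

Lemma VS : [tuple tnth Vx j \mPo Sx | j < n] = a_to_r n.
Proof.
apply: eq_from_tnth => j; rewrite !tnth_mktuple rmorphM rmorph_sign /=.
by rewrite comp_mpolyXU -tnth_nth tnth_mktuple /= subnSK.
Qed.

Lemma VW : [tuple tnth Vx j \mPo Wx | j < n] = [tuple 'X_j | j < n].
Proof.
apply: eq_from_tnth => j; rewrite !tnth_mktuple rmorphM rmorph_sign /=.
by rewrite comp_mpolyXU -tnth_nth tnth_mktuple /= rev_ordK subnSK // sign2.
Qed.

Lemma Wsig : [tuple tnth Wx j \mPo a_to_r n | j < n] = Sx.
Proof.
apply: eq_from_tnth => j; rewrite !tnth_mktuple rmorphM rmorph_sign /=.
by rewrite comp_mpolyXU -tnth_nth tnth_mktuple /= subKn // sign2.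
Qed.

Lemma sig_inj0 (x : P) : x \mPo a_to_r n = 0 -> x = 0.
Proof.
rewrite -VS -comp_mpolyA => /msym_fundamental_un0 h.
by rewrite -[x]comp_mpoly_id -VW -comp_mpolyA h comp_mpoly0.
Qed.

Lemma sig_inj (x y : P) : x \mPo a_to_r n = y \mPo a_to_r n -> x = y.
Proof.
by move=> h; apply/eqP; rewrite -subr_eq0; apply/eqP/sig_inj0; rewrite raddfB /= h subrr.
Qed.

Lemma sig_sym (x : P) : x \mPo a_to_r n \is symmetric.
Proof.
apply: mcomp_sym => i; rewrite -tnth_nth tnth_mktuple.
apply/issymP => s; rewrite msymM rmorph_sign; congr (_ * _); exact/issymP/mesym_sym.
Qed.

Lemma sym_in_image (h : P) : h \is symmetric -> exists G, h = G \mPo a_to_r n.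
Proof.
move=> /sym_fundamental [t [ht _]]; exists (t \mPo Wx).
by rewrite comp_mpolyA Wsig.
Qed.

End Sym2.

Section Main.
Variable n : nat.
Local Notation P := {mpoly rat[n]}.

Lemma rXE k (hk : (k < n)%N) : rX n k = 'X_(Ordinal hk).
Proof. by rewrite /rX (insubT (fun k => k < n)%N hk). Qed.

Lemma mdvd_trans (a b c : P) : mdvd a b -> mdvd b c -> mdvd a c.
Proof. by move=> [x ->] [y ->]; exists (y * x); rewrite mulrA. Qed.

Let vs := [seq x <- index_enum (T n) | valid x].

Lemma vs_uniq : uniq vs.
Proof. by apply: filter_uniq; apply: index_enum_uniq. Qed.

Lemma vs_valid x : x \in vs -> valid x.
Proof. by rewrite mem_filter => /andP[]. Qed.

Lemma Pprod_neq0 : Pprod n != 0.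
Proof.
rewrite Pprod_big prodf_seq_neq0; apply/allP => x hx; apply/implyP => _.
by case/and3P: (vs_valid hx) => _ h2 h3; apply: lf_neq0.
Qed.

Lemma keyB (D2 : P) (hD2 : comp_mpoly (a_to_r n) D2 = Pprod n) (q : P)
  (o0 o1 o2 : 'I_n) : o1 != o2 -> o0 != o1 -> o0 != o2 ->
  mdvd (lf o1 o2 o0) (q \mPo a_to_r n) -> exists c, q = c * D2.
Proof.
move=> h12 h01 h02 hL.
set f := q \mPo a_to_r n.
have fs : f \is symmetric by apply: sig_sym.
have hall : forall x, x \in vs -> mdvd (lfx x) f.
  move=> x hx; case/and3P: (vs_valid hx) => v1 v2 v3.
  apply: (dvd_reach fs h12 h01 h02 _ v2 v3 hL).
  by rewrite -val_eqE /= neq_ltn v1.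
have [h hh] := prod_dvd vs_uniq (introT allP vs_valid) hall.
rewrite -Pprod_big in hh.
have hs : h \is symmetric.
  apply: (msymMK Pprod_neq0); first by rewrite -hD2; apply: sig_sym.
  by rewrite mulrC -hh.
have [G hG] := sym_in_image hs.
exists G; apply: sig_inj.
by rewrite -/f hh hG rmorphM /= hD2.
Qed.

Lemma keyC (D2 : P) (hD2 : comp_mpoly (a_to_r n) D2 = Pprod n) (q c : P) :
  q = c * D2 -> mdvd (Pprod n) (q \mPo a_to_r n).
Proof. by move=> ->; exists (c \mPo a_to_r n); rewrite rmorphM /= hD2. Qed.

Lemma Pdvd (o0 o1 o2 : 'I_n) : (o1 < o2)%N -> o0 != o1 -> o0 != o2 ->
  mdvd (lf o1 o2 o0) (Pprod n).
Proof.
move=> h12 h01 h02; rewrite Pprod_big.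
have hx : (o1, (o2, o0)) \in vs by rewrite mem_filter /valid /= h12 h01 h02 mem_index_enum.
rewrite (bigD1_seq _ hx vs_uniq) /=.
by eexists; rewrite mulrC.
Qed.

End Main.

Unset Implicit Arguments.
Theorem proposition7 (n : nat) (hn : (3 <= n)%N) (D2 : {mpoly rat[n]})
  (hD2 : comp_mpoly (a_to_r n) D2 = Pprod n) :
  forall q : {mpoly rat[n]},
    (in_ideal (emb_r (Pprod n) :: vgens n) (emb_a q) <->
     in_ideal (emb_r (2 * rX n 0 - rX n 1 - rX n 2) :: vgens n) (emb_a q)) /\
    (in_ideal (emb_r (2 * rX n 0 - rX n 1 - rX n 2) :: vgens n) (emb_a q) <->
     in_ideal [:: D2] q).
Proof.
move=> q.
have h0 : (0 < n)%N by apply: leq_trans hn.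
have h1 : (1 < n)%N by apply: leq_trans hn.
have h2 : (2 < n)%N by [].
set o0 := Ordinal h0; set o1 := Ordinal h1; set o2 := Ordinal h2.
have eL : 2 * rX n 0 - rX n 1 - rX n 2 = lf o1 o2 o0 by rewrite !rXE.
have h12 : o1 != o2 by rewrite -val_eqE.
have h01 : o0 != o1 by rewrite -val_eqE.
have h02 : o0 != o2 by rewrite -val_eqE.
rewrite eL !ideal_char in_ideal1.
have PL := Pdvd (isT : (o1 < o2)%N) h01 h02.
split; split.
- by move=> hP; apply: mdvd_trans PL hP.
- by move=> hL; have [c hc] := keyB hD2 h12 h01 h02 hL; exact: (keyC hD2 hc).
- move=> hL; have [c hc] := keyB hD2 h12 h01 h02 hL; exists c; exact: hc.
- by move=> [c hc]; apply: mdvd_trans PL (keyC hD2 hc).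
Qed.
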